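(* Let $X$ be a compact metric space and let $F:\mathscr{K}(X)\to\mathscr{K}(X)$ be a continuous monotone map. If $X$ is an attractor of $F$, then $X$ is asymptotically stable. In particular, if $X$ is a strict attractor of a finite family $\mathscr{F}$ of continuous maps of $X$ (i.e. of its Hutchinson operator), then $X$ is asymptotically stable for the Hutchinson operator.
   Context: $\mathscr{K}(X)$ is the set of nonempty compact subsets of $X$ with the Hausdorff distance $\mathrm{d_H}$. $F$ is monotone if $A\subset B$ implies $F(A)\subset F(B)$. $K\in\mathscr{K}(X)$ is an attractor of $F$ if there is an open set $\mathcal{U}\subset\mathscr{K}(X)$ containing $K$ with $F^n(C)\to K$ in $\mathrm{d_H}$ for every $C\in\mathcal{U}$. An attractor $K$ is asymptotically stable if moreover for every $\varepsilon>0$ there is $\delta>0$ such that $\mathrm{d_H}(F^n(S),K)<\varepsilon$ for all $n\geq0$ and all $S\in\mathscr{K}(X)$ with $\mathrm{d_H}(S,K)<\delta$. The Hutchinson operator of $\mathscr{F}=\{f_1,\dots,f_k\}$ is $F(A)=\bigcup_i f_i(A)$. $K$ is a strict attractor if there is an open $U\subset X$ with $K\subset U$ and $F^n(S)\to K$ for all nonempty compact $S\subset U$. *)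

(* Defs.v *)
From Stdlib Require Import Reals List.
From Coquelicot Require Import Rbar Lub.
Open Scope R_scope.
Set Implicit Arguments.

Record MetricSpace := {
  mcarrier :> Type;
  mdist : mcarrier -> mcarrier -> R;
  mdist_eq0 : forall x y, mdist x y = 0 <-> x = y;
  mdist_sym : forall x y, mdist x y = mdist y x;
  mdist_tri : forall x y z, mdist x z <= mdist x y + mdist y z
}.

Section Defs.
Variable M : MetricSpace.

Definition mopen (U : M -> Prop) : Prop :=
  forall x, U x -> exists r, 0 < r /\ forall y, mdist M x y < r -> U y.

Definition mcompact (A : M -> Prop) : Prop :=
  forall (I : Type) (G : I -> M -> Prop),
    (forall i, mopen (G i)) ->
    (forall x, A x -> exists i, G i x) ->
    exists l : list I, forall x, A x -> exists i, In i l /\ G i x.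

Definition compact_space : Prop := mcompact (fun _ => True).

Definition mcontinuous (f : M -> M) : Prop :=
  forall x eps, 0 < eps -> exists delta, 0 < delta /\
    forall y, mdist M x y < delta -> mdist M (f x) (f y) < eps.

Record KX := {
  kset : M -> Prop;
  kset_ne : exists x, kset x;
  kset_cpt : mcompact kset
}.

Definition point_set_dist (x : M) (B : M -> Prop) : R :=
  real (Glb_Rbar (fun r => exists b, B b /\ r = mdist M x b)).

Definition excess (A B : M -> Prop) : R :=
  real (Lub_Rbar (fun r => exists a, A a /\ r = point_set_dist a B)).

Definition dH (A B : KX) : R :=
  Rmax (excess (kset A) (kset B)) (excess (kset B) (kset A)).

Definition monotone (F : KX -> KX) : Prop :=
  forall A B, (forall x, kset A x -> kset B x) ->
    forall x, kset (F A) x -> kset (F B) x.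

Definition dH_continuous (F : KX -> KX) : Prop :=
  forall A eps, 0 < eps -> exists delta, 0 < delta /\
    forall B, dH A B < delta -> dH (F A) (F B) < eps.

Definition K_open (U : KX -> Prop) : Prop :=
  forall A, U A -> exists r, 0 < r /\ forall B, dH A B < r -> U B.

Definition dH_converges (s : nat -> KX) (K : KX) : Prop :=
  forall eps, 0 < eps -> exists N, forall n, (N <= n)%nat -> dH (s n) K < eps.

Definition attractor (F : KX -> KX) (K : KX) : Prop :=
  exists U, K_open U /\ U K /\
    forall C, U C -> dH_converges (fun n => Nat.iter n F C) K.

Definition asymptotically_stable (F : KX -> KX) (K : KX) : Prop :=
  attractor F K /\
  forall eps, 0 < eps -> exists delta, 0 < delta /\
    forall (S : KX) (n : nat), dH S K < delta -> dH (Nat.iter n F S) K < eps.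

Definition is_hutchinson (fs : list (M -> M)) (H : KX -> KX) : Prop :=
  forall A y, kset (H A) y <-> exists f, In f fs /\ exists x, kset A x /\ y = f x.

Definition strict_attractor (H : KX -> KX) (K : KX) : Prop :=
  exists U : M -> Prop, mopen U /\ (forall x, kset K x -> U x) /\
    forall S : KX, (forall x, kset S x -> U x) ->
      dH_converges (fun n => Nat.iter n H S) K.

End Defs.

(* Main.v *)
Require Import Defs.
From Stdlib Require Import Reals List Lra Lia Classical IndefiniteDescription.
From Coquelicot Require Import Rbar Lub.
Open Scope R_scope.

Lemma d_refl {M : MetricSpace} (x : M) : mdist M x x = 0.
Proof. apply (proj2 (mdist_eq0 M x x)); reflexivity. Qed.

Lemma d_nonneg {M : MetricSpace} (x y : M) : 0 <= mdist M x y.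
Proof. pose proof (mdist_tri M x y x). rewrite d_refl, (mdist_sym M y x) in H. lra. Qed.

Lemma ball_open {M : MetricSpace} (c : M) r : mopen M (fun z => mdist M c z < r).
Proof.
  intros x Hx. exists (r - mdist M c x). split; [lra|].
  intros y Hy. pose proof (mdist_tri M c x y). lra.
Qed.

Lemma far_open {M : MetricSpace} (c : M) a : mopen M (fun z => a < mdist M c z).
Proof.
  intros x Hx. exists (mdist M c x - a). split; [lra|].
  intros y Hy. pose proof (mdist_tri M c y x). rewrite (mdist_sym M y x) in H. lra.
Qed.

Definition lmax {M : MetricSpace} (x0 : M) (l : list M) : R :=
  fold_right (fun c acc => Rmax (mdist M x0 c) acc) 0 l.

Lemma lmax_ge {M : MetricSpace} (x0 : M) l c : In c l -> mdist M x0 c <= lmax x0 l.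
Proof.
  induction l; simpl; [tauto|]. intros [->|H].
  - apply Rmax_l.
  - eapply Rle_trans; [apply IHl; auto| apply Rmax_r].
Qed.

Lemma bounded {M : MetricSpace} (HX : compact_space M) (x0 : M) :
  exists B, forall x y : M, mdist M x y <= B.
Proof.
  destruct (HX M (fun c z => mdist M c z < 1)) as [l Hl].
  - intros; apply ball_open.
  - intros x _. exists x. rewrite d_refl; lra.
  - exists (2 * (lmax x0 l + 1)). intros x y.
    destruct (Hl x I) as [c [Hc Hcx]]. destruct (Hl y I) as [c' [Hc' Hcy]].
    pose proof (lmax_ge x0 l c Hc). pose proof (lmax_ge x0 l c' Hc').
    pose proof (mdist_tri M x c y). pose proof (mdist_tri M c x0 y).
    pose proof (mdist_tri M x0 c' y).
    rewrite (mdist_sym M x c) in *. rewrite (mdist_sym M c x0) in *. lra.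
Qed.

Lemma psd_spec {M : MetricSpace} (a : M) (B : M -> Prop) b0 : B b0 ->
  0 <= point_set_dist M a B /\
  (forall b, B b -> point_set_dist M a B <= mdist M a b) /\
  (forall e, (forall b, B b -> e <= mdist M a b) -> e <= point_set_dist M a B).
Proof.
  intros Hb0. unfold point_set_dist.
  destruct (Glb_Rbar_correct (fun r => exists b, B b /\ r = mdist M a b)) as [Hlb Hgr].
  assert (H0 : Rbar_le 0 (Glb_Rbar (fun r => exists b, B b /\ r = mdist M a b))).
  { apply Hgr. intros r [b [_ ->]]. simpl. apply d_nonneg. }
  assert (H1 : Rbar_le (Glb_Rbar (fun r => exists b, B b /\ r = mdist M a b)) (mdist M a b0)).
  { apply Hlb. eauto. }
  destruct (Glb_Rbar (fun r => exists b, B b /\ r = mdist M a b)) as [g| |] eqn:E;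
    simpl in *; try tauto.
  split; [auto|split].
  - intros b Hb. assert (Rbar_le (Finite g) (mdist M a b)) by (apply Hlb; eauto). exact H.
  - intros e He. assert (Rbar_le (Finite e) (Finite g)).
    { apply Hgr. intros r [b [Hb ->]]. simpl. auto. }
    exact H.
Qed.

Lemma psd_lt {M : MetricSpace} (a : M) (B : M -> Prop) b0 e : B b0 ->
  point_set_dist M a B < e -> exists b, B b /\ mdist M a b < e.
Proof.
  intros Hb0 Hlt. destruct (psd_spec a B b0 Hb0) as [_ [_ H3]].
  apply NNPP; intro Hn. assert (e <= point_set_dist M a B).
  { apply H3. intros b Hb. apply Rnot_lt_le. intro. apply Hn; eauto. }
  lra.
Qed.

Lemma excess_spec {M : MetricSpace} (HX : compact_space M) (A B : M -> Prop) a0 b0 :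
  A a0 -> B b0 ->
  (forall a, A a -> point_set_dist M a B <= excess M A B) /\
  (forall e, (forall a, A a -> point_set_dist M a B <= e) -> excess M A B <= e).
Proof.
  intros Ha0 Hb0. destruct (bounded HX a0) as [Bd HBd]. unfold excess.
  destruct (Lub_Rbar_correct (fun r => exists a, A a /\ r = point_set_dist M a B)) as [Hub Hl].
  assert (H0 : Rbar_le (point_set_dist M a0 B) (Lub_Rbar (fun r => exists a, A a /\ r = point_set_dist M a B))).
  { apply Hub; eauto. }
  assert (H1 : Rbar_le (Lub_Rbar (fun r => exists a, A a /\ r = point_set_dist M a B)) Bd).
  { apply Hl. intros r [a [Ha ->]]. simpl. destruct (psd_spec a B b0 Hb0) as [_ [H2 _]].
    eapply Rle_trans; [apply H2; eauto| apply HBd]. }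
  destruct (Lub_Rbar (fun r => exists a, A a /\ r = point_set_dist M a B)) as [g| |] eqn:E;
    simpl in *; try tauto.
  split.
  - intros a Ha. assert (Rbar_le (point_set_dist M a B) (Finite g)) by (apply Hub; eauto). exact H.
  - intros e He. apply (Hl (Finite e)). intros r [a [Ha ->]]. simpl. auto.
Qed.

Lemma dH_lt {M : MetricSpace} (HX : compact_space M) (A B : KX M) e :
  dH A B < e ->
  (forall a, kset A a -> exists b, kset B b /\ mdist M a b < e) /\
  (forall b, kset B b -> exists a, kset A a /\ mdist M b a < e).
Proof.
  intros H. destruct (kset_ne A) as [a0 Ha0]. destruct (kset_ne B) as [b0 Hb0].
  unfold dH in H. pose proof (Rmax_l (excess M (kset A) (kset B)) (excess M (kset B) (kset A))).
  pose proof (Rmax_r (excess M (kset A) (kset B)) (excess M (kset B) (kset A))).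
  split.
  - intros a Ha. apply (psd_lt a _ b0); auto.
    destruct (excess_spec HX (kset A) (kset B) a0 b0 Ha0 Hb0) as [E1 _].
    specialize (E1 a Ha). lra.
  - intros b Hb. apply (psd_lt b _ a0); auto.
    destruct (excess_spec HX (kset B) (kset A) b0 a0 Hb0 Ha0) as [E1 _].
    specialize (E1 b Hb). lra.
Qed.

Lemma dH_le {M : MetricSpace} (HX : compact_space M) (A B : KX M) e :
  (forall a, kset A a -> exists b, kset B b /\ mdist M a b <= e) ->
  (forall b, kset B b -> exists a, kset A a /\ mdist M b a <= e) ->
  dH A B <= e.
Proof.
  intros H1 H2. destruct (kset_ne A) as [a0 Ha0]. destruct (kset_ne B) as [b0 Hb0].
  unfold dH. apply Rmax_lub.
  - apply (excess_spec HX _ _ a0 b0 Ha0 Hb0). intros a Ha. destruct (H1 a Ha) as [b [Hb Hd]].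
    destruct (psd_spec a _ b0 Hb0) as [_ [P _]]. eapply Rle_trans; [apply P; eauto|auto].
  - apply (excess_spec HX _ _ b0 a0 Hb0 Ha0). intros b Hb. destruct (H2 b Hb) as [a [Ha Hd]].
    destruct (psd_spec b _ a0 Ha0) as [_ [P _]]. eapply Rle_trans; [apply P; eauto|auto].
Qed.

Definition finset_ {M : MetricSpace} (m : nat) (t : nat -> M) : M -> Prop :=
  fun y => exists i, (i < m)%nat /\ y = t i.

Lemma fin_cpt {M : MetricSpace} m (t : nat -> M) : mcompact M (finset_ m t).
Proof.
  intros I G _ Hc. induction m.
  - exists nil. intros x [i [Hi _]]. lia.
  - destruct IHm as [l Hl].
    { intros x [i [Hi ->]]. apply Hc. exists i. split; [lia|auto]. }
    destruct (Hc (t m)) as [j Hj]. { exists m. split; [lia|auto]. }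
    exists (j :: l). intros x [i [Hi ->]].
    destruct (Nat.eq_dec i m) as [->|Hne].
    + exists j. split; [left; auto|auto].
    + destruct (Hl (t i)) as [k [Hk Hk']]. { exists i. split; [lia|auto]. }
      exists k. split; [right; auto|auto].
Qed.

Lemma fin_ne {M : MetricSpace} m (t : nat -> M) : (0 < m)%nat -> exists x, finset_ m t x.
Proof. intros. exists (t 0%nat). exists 0%nat. split; auto. Qed.

Definition mkFin {M : MetricSpace} m (Hm : (0 < m)%nat) (t : nat -> M) : KX M :=
  @Build_KX M (finset_ m t) (fin_ne m t Hm) (fin_cpt m t).

Lemma iter_S {T} (F : T -> T) j A : Nat.iter (S j) F A = F (Nat.iter j F A).
Proof. reflexivity. Qed.

Lemma iter_cont {M : MetricSpace} (F : KX M -> KX M) : dH_continuous F ->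
  forall j A eps, 0 < eps -> exists delta, 0 < delta /\
    forall B, dH A B < delta -> dH (Nat.iter j F A) (Nat.iter j F B) < eps.
Proof.
  intros Fc j. induction j; intros A eps He.
  - exists eps. split; auto.
  - destruct (Fc (Nat.iter j F A) eps He) as [d1 [Hd1 P1]].
    destruct (IHj A d1 Hd1) as [d2 [Hd2 P2]].
    exists d2. split; auto. intros B HB. rewrite !iter_S. apply P1, P2, HB.
Qed.

Lemma iter_mono {M : MetricSpace} (F : KX M -> KX M) : monotone F ->
  forall j A B, (forall x, kset A x -> kset B x) ->
    forall x, kset (Nat.iter j F A) x -> kset (Nat.iter j F B) x.
Proof.
  intros Fm j. induction j; intros A B H; simpl; auto.
  apply Fm. apply IHj. auto.
Qed.

Lemma dH_sym {M : MetricSpace} (A B : KX M) : dH A B = dH B A.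
Proof. unfold dH. apply Rmax_comm. Qed.

Lemma list_min {T : Type} (l : list T) (P : T -> R -> Prop) :
  (forall x d d', P x d -> 0 < d' <= d -> P x d') ->
  (forall x, In x l -> exists d, 0 < d /\ P x d) ->
  exists d, 0 < d /\ forall x, In x l -> P x d.
Proof.
  intros Hmon. induction l; intros H.
  - exists 1. split; [lra|]. intros x [].
  - destruct IHl as [d1 [Hd1 P1]]. { intros x Hx. apply H. right; auto. }
    destruct (H a (or_introl eq_refl)) as [d2 [Hd2 P2]].
    exists (Rmin d1 d2). split. { apply Rmin_pos; auto. }
    intros x [Hx|Hx].
    + subst x. apply Hmon with d2; auto. split; [apply Rmin_pos; auto|apply Rmin_r].
    + apply Hmon with d1; auto. split; [apply Rmin_pos; auto|apply Rmin_l].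
Qed.

Lemma nat_min (m : nat) (P : nat -> R -> Prop) :
  (forall x d d', P x d -> 0 < d' <= d -> P x d') ->
  (forall i, (i < m)%nat -> exists d, 0 < d /\ P i d) ->
  exists d, 0 < d /\ forall i, (i < m)%nat -> P i d.
Proof.
  intros Hmon H. destruct (list_min (seq 0 m) P Hmon) as [d [Hd Pd]].
  - intros x Hx. apply in_seq in Hx. apply H. lia.
  - exists d. split; auto. intros i Hi. apply Pd. apply in_seq. lia.
Qed.

Lemma cluster {M : MetricSpace} (HX : compact_space M) (u : nat -> M) :
  exists y, forall e, 0 < e -> forall N, exists j, (N <= j)%nat /\ mdist M (u j) y < e.
Proof.
  apply NNPP. intro Hn.
  assert (H : forall y, exists p : R * nat, 0 < fst p /\ forall j, (snd p <= j)%nat -> fst p <= mdist M (u j) y).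
  { intro y. apply NNPP. intro Hy. apply Hn. exists y. intros e He N.
    apply NNPP. intro Hj. apply Hy. exists (e, N). simpl. split; auto.
    intros j Hj'. apply Rnot_lt_le. intro. apply Hj. eauto. }
  set (g := fun y => proj1_sig (constructive_indefinite_description _ (H y))).
  assert (gP : forall y, 0 < fst (g y) /\ forall j, (snd (g y) <= j)%nat -> fst (g y) <= mdist M (u j) y).
  { intro y. exact (proj2_sig (constructive_indefinite_description _ (H y))). }
  clearbody g.
  destruct (HX M (fun y z => mdist M y z < fst (g y))) as [l Hl].
  - intros; apply ball_open.
  - intros x _. exists x. rewrite d_refl. apply gP.
  - set (N := fold_right Nat.max 0%nat (map (fun y => snd (g y)) l)).
    destruct (Hl (u N) I) as [y [Hy Hd]].
    assert (HN : (snd (g y) <= N)%nat).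
    { unfold N. clear Hd Hl N. induction l as [|b l IHl]; simpl in *; [tauto|].
      destruct Hy as [Hy|Hy]; [subst; lia|]. specialize (IHl Hy). lia. }
    destruct (gP y) as [Hp Hp'].
    specialize (Hp' N HN). rewrite mdist_sym in Hp'. lra.
Qed.

Definition box {M : MetricSpace} (m : nat) (c : nat -> M) (r : R) (t : nat -> M) : Prop :=
  forall i, (i < m)%nat -> mdist M (c i) (t i) < r.

Lemma baire {M : MetricSpace} (HX : compact_space M) (m : nat) (a : nat -> M) (r0 : R)
  (C : nat -> (nat -> M) -> Prop) :
  0 < r0 ->
  (forall t, box m a r0 t -> exists n, C n t) ->
  (forall n p, ~ C n p -> exists s, 0 < s /\ forall t, box m p s t -> ~ C n t) ->
  exists n c rho, 0 < rho /\ forall t, box m c rho t -> C n t.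
Proof.
  intros Hr0 Hcov Hcl. apply NNPP. intro Hneg.
  assert (Hn : forall n c rho, 0 < rho -> exists t, box m c rho t /\ ~ C n t).
  { intros n c rho Hr. apply NNPP. intro H. apply Hneg. exists n, c, rho. split; auto.
    intros t Ht. apply NNPP. intro. apply H. eauto. }
  assert (Hstep : forall (k : nat) (s : (nat -> M) * R), exists s' : (nat -> M) * R,
    0 < snd s -> 0 < snd s' /\
      forall t, box m (fst s') (2 * snd s') t -> box m (fst s) (snd s) t /\ ~ C k t).
  { intros k [c rho]. simpl. destruct (Rlt_dec 0 rho) as [Hr|Hr]; [|exists (c, rho); tauto].
    destruct (Hn k c rho Hr) as [p [Hp HCp]].
    destruct (Hcl k p HCp) as [s [Hs Hs']].
    destruct (nat_min m (fun i d => d <= rho - mdist M (c i) (p i))) as [mu [Hmu Hmu']].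
    { intros; lra. }
    { intros i Hi. exists (rho - mdist M (c i) (p i)). specialize (Hp i Hi). split; lra. }
    exists (p, Rmin s mu / 2). intros _. simpl. split.
    { pose proof (Rmin_pos s mu Hs Hmu). lra. }
    intros t Ht. replace (2 * (Rmin s mu / 2)) with (Rmin s mu) in Ht by lra.
    split.
    - intros i Hi. specialize (Ht i Hi). specialize (Hmu' i Hi).
      pose proof (Rmin_r s mu). pose proof (mdist_tri M (c i) (p i) (t i)). lra.
    - apply Hs'. intros i Hi. specialize (Ht i Hi). pose proof (Rmin_l s mu). lra. }
  set (st := fun k s => proj1_sig (constructive_indefinite_description _ (Hstep k s))).
  assert (stP : forall k s, 0 < snd s -> 0 < snd (st k s) /\
      forall t, box m (fst (st k s)) (2 * snd (st k s)) t -> box m (fst s) (snd s) t /\ ~ C k t).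
  { intros k s. exact (proj2_sig (constructive_indefinite_description _ (Hstep k s))). }
  clearbody st.
  set (sq := fix sq (k : nat) : (nat -> M) * R :=
     match k with O => (a, r0) | S k' => st k' (sq k') end).
  assert (sq0 : sq 0%nat = (a, r0)) by reflexivity.
  assert (sqS : forall k, sq (S k) = st k (sq k)) by reflexivity.
  clearbody sq.
  assert (pos : forall k, 0 < snd (sq k)).
  { induction k. rewrite sq0; simpl; auto. rewrite sqS. apply stP; auto. }
  assert (nest1 : forall k t, box m (fst (sq (S k))) (snd (sq (S k))) t -> box m (fst (sq k)) (snd (sq k)) t).
  { intros k t Ht. apply (stP k (sq k) (pos k)). intros i Hi. specialize (Ht i Hi).
    pose proof (pos (S k)). rewrite sqS in *. lra. }
  assert (nest : forall k j, (k <= j)%nat -> forall t, box m (fst (sq j)) (snd (sq j)) t -> box m (fst (sq k)) (snd (sq k)) t).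
  { intros k j Hkj. induction Hkj. - auto. - intros t Ht. apply IHHkj, nest1, Ht. }
  assert (self : forall j, box m (fst (sq j)) (snd (sq j)) (fst (sq j))).
  { intros j i Hi. rewrite d_refl. apply pos. }
  set (y := fun i => proj1_sig (constructive_indefinite_description _ (cluster HX (fun j => fst (sq j) i)))).
  assert (yP : forall i e, 0 < e -> forall N, exists j, (N <= j)%nat /\ mdist M (fst (sq j) i) (y i) < e).
  { intro i. exact (proj2_sig (constructive_indefinite_description _ (cluster HX (fun j => fst (sq j) i)))). }
  clearbody y.
  assert (Hy : forall k, box m (fst (sq (S k))) (2 * snd (sq (S k))) y).
  { intros k i Hi. destruct (yP i (snd (sq (S k))) (pos (S k)) (S k)) as [j [Hj Hd]].
    pose proof (nest (S k) j Hj _ (self j) i Hi).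
    pose proof (mdist_tri M (fst (sq (S k)) i) (fst (sq j) i) (y i)). lra. }
  destruct (Hcov y) as [n Hn'].
  { specialize (Hy 0%nat). rewrite sqS in Hy.
    apply (stP 0%nat (sq 0%nat) (pos 0%nat)) in Hy. rewrite sq0 in Hy. apply Hy. }
  specialize (Hy n). rewrite sqS in Hy. apply (stP n (sq n) (pos n)) in Hy. tauto.
Qed.

Lemma closed_cpt {M : MetricSpace} (A : M -> Prop) : mcompact M A ->
  forall x, ~ A x -> exists rho, 0 < rho /\ forall y, A y -> rho <= mdist M x y.
Proof.
  intros cpt x Hx.
  assert (pos : forall y, A y -> 0 < mdist M x y).
  { intros y Hy. destruct (Rle_lt_or_eq_dec 0 _ (d_nonneg x y)) as [H|H]; auto.
    symmetry in H. apply (mdist_eq0 M) in H. subst. tauto. }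
  destruct (cpt M (fun y z => A y /\ mdist M x y / 2 < mdist M x z)) as [l Hl].
  - intros y z [Hy Hz]. destruct (far_open x (mdist M x y / 2) z Hz) as [r [Hr Hr']].
    exists r. split; auto.
  - intros z Hz. exists z. split; auto. specialize (pos z Hz). lra.
  - destruct (list_min l (fun y d => A y -> d <= mdist M x y / 2)) as [d [Hd Hd']].
    + intros; auto. specialize (H H1). lra.
    + intros y _. destruct (classic (A y)) as [Hy|Hy].
      * exists (mdist M x y / 2). specialize (pos y Hy). split; [lra|]. intros; lra.
      * exists 1. split; [lra|]. tauto.
    + exists d. split; auto. intros y Hy. destruct (Hl y Hy) as [z [Hz [Az Hdz]]].
      specialize (Hd' z Hz Az). lra.
Qed.

Lemma FX_full {M : MetricSpace} (HX : compact_space M) (Xfull : KX M)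
  (hfull : forall x, kset Xfull x) (F : KX M -> KX M) :
  monotone F -> dH_converges (fun n => Nat.iter n F Xfull) Xfull ->
  forall x, kset (F Xfull) x.
Proof.
  intros Fm conv x. apply NNPP. intro Hx.
  destruct (closed_cpt _ (kset_cpt (F Xfull)) x Hx) as [rho [Hr Hr']].
  destruct (conv rho Hr) as [N HN]. specialize (HN (S N) ltac:(lia)).
  destruct (dH_lt HX _ _ _ HN) as [_ H2]. destruct (H2 x (hfull x)) as [y [Hy Hd]].
  rewrite iter_S in Hy. assert (kset (F Xfull) y).
  { revert Hy. apply Fm. intros; apply hfull. }
  specialize (Hr' y H). lra.
Qed.

Lemma cont_X {M : MetricSpace} (HX : compact_space M) (Xfull : KX M)
  (hfull : forall x, kset Xfull x) (F : KX M -> KX M) :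
  dH_continuous F -> (forall x, kset (F Xfull) x) ->
  forall m eps, 0 < eps -> exists delta, 0 < delta /\
    forall S, dH S Xfull < delta -> dH (Nat.iter m F S) Xfull < eps.
Proof.
  intros Fc FX m. induction m; intros eps He.
  - exists eps. split; auto.
  - destruct (Fc Xfull (eps/2) ltac:(lra)) as [d1 [Hd1 P1]].
    destruct (IHm d1 Hd1) as [d [Hd P]]. exists d. split; auto.
    intros T HS. specialize (P T HS). rewrite dH_sym in P. specialize (P1 _ P).
    destruct (dH_lt HX _ _ _ P1) as [H1 _].
    enough (dH (Nat.iter (S m) F T) Xfull <= eps/2) by lra.
    apply dH_le; auto.
    + intros a Ha. exists a. split; auto. rewrite d_refl. lra.
    + intros b _. destruct (H1 b (FX b)) as [c [Hc Hdc]]. exists c. split; auto. lra.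
Qed.

Lemma prefix {M : MetricSpace} (HX : compact_space M) (Xfull : KX M)
  (hfull : forall x, kset Xfull x) (F : KX M -> KX M) :
  dH_continuous F -> (forall x, kset (F Xfull) x) ->
  forall N eps, 0 < eps -> exists delta, 0 < delta /\
    forall S, dH S Xfull < delta -> forall m, (m < N)%nat -> dH (Nat.iter m F S) Xfull < eps.
Proof.
  intros Fc FX N eps He. induction N.
  - exists 1. split; [lra|]. intros; lia.
  - destruct IHN as [d1 [Hd1 P1]].
    destruct (cont_X HX Xfull hfull F Fc FX N eps He) as [d2 [Hd2 P2]].
    exists (Rmin d1 d2). split; [apply Rmin_pos; auto|].
    intros S HS m Hm. pose proof (Rmin_l d1 d2). pose proof (Rmin_r d1 d2).
    destruct (Nat.eq_dec m N) as [->|Hne].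
    + apply P2. lra.
    + apply P1; [lra|lia].
Qed.

Lemma unif {M : MetricSpace} (HX : compact_space M) (Xfull : KX M)
  (hfull : forall x, kset Xfull x) (F : KX M -> KX M)
  (Fc : dH_continuous F) (Fm : monotone F) (U : KX M -> Prop)
  (KU : K_open U) (UX : U Xfull)
  (conv : forall C, U C -> dH_converges (fun n => Nat.iter n F C) Xfull)
  eps : 0 < eps -> exists n delta, 0 < delta /\ forall S, dH S Xfull < delta ->
    forall j, (n <= j)%nat -> dH (Nat.iter j F S) Xfull < eps.
Proof.
  intros He.
  destruct (KU Xfull UX) as [r [Hr HrU]].
  destruct (kset_ne Xfull) as [x0 _].
  destruct (HX M (fun c z => mdist M c z < r/4)) as [l Hl].
  { intros; apply ball_open. }
  { intros x _. exists x. rewrite d_refl. lra. }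
  set (m := length l). set (a := fun i => nth i l x0).
  assert (Hnet : forall x, exists i, (i < m)%nat /\ mdist M (a i) x < r/4).
  { intros x. destruct (Hl x I) as [c [Hc Hd]]. destruct (In_nth l c x0 Hc) as [i [Hi Hi']].
    exists i. split; auto. unfold a. rewrite Hi'. auto. }
  assert (Hm : (0 < m)%nat).
  { destruct (Hnet x0) as [i [Hi _]]. lia. }
  set (Bt := fun t : nat -> M => mkFin m Hm t).
  set (e0 := eps / 4).
  set (C := fun n t => forall j, (n <= j)%nat -> forall e', e0 < e' -> forall x,
       exists y, kset (Nat.iter j F (Bt t)) y /\ mdist M x y < e').
  assert (HBt : forall t y, kset (Bt t) y <-> exists i, (i < m)%nat /\ y = t i).
  { intros; simpl; unfold finset_; tauto. }
  assert (dBt : forall p t s, 0 <= s -> (forall i, (i < m)%nat -> mdist M (p i) (t i) <= s) -> dH (Bt p) (Bt t) <= s).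
  { intros p t s Hs H. apply dH_le; auto.
    - intros y Hy. apply HBt in Hy. destruct Hy as [i [Hi ->]]. exists (t i). split; [apply HBt; eauto|auto].
    - intros y Hy. apply HBt in Hy. destruct Hy as [i [Hi ->]]. exists (p i). split; [apply HBt; eauto|].
      rewrite mdist_sym. auto. }
  destruct (baire HX m a (r/4) C) as [n [c [rho [Hrho HC]]]].
  - lra.
  - intros t Ht. assert (U (Bt t)).
    { apply HrU. enough (dH Xfull (Bt t) <= r/2) by lra. apply (dH_le HX).
      - intros x _. destruct (Hnet x) as [i [Hi Hd]]. exists (t i). split; [apply HBt; eauto|].
        specialize (Ht i Hi). pose proof (mdist_tri M x (a i) (t i)). rewrite (mdist_sym M x (a i)) in H. lra.
      - intros b _. exists b. split; auto. rewrite d_refl. lra. }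
    destruct (conv _ H e0 ltac:(unfold e0; lra)) as [N HN]. exists N.
    intros j Hj e' He' x. destruct (dH_lt HX _ _ _ (HN j Hj)) as [_ H2].
    destruct (H2 x (hfull x)) as [y [Hy Hd]]. exists y. split; auto. lra.
  - intros n p Hn.
    assert (exists j, (n <= j)%nat /\ exists e', e0 < e' /\ exists x, forall y,
        kset (Nat.iter j F (Bt p)) y -> e' <= mdist M x y) as [j [Hj [e' [He' [x Hx]]]]].
    { apply NNPP. intro H. apply Hn. intros j Hj e' He' x. apply NNPP. intro H'. apply H.
      exists j. split; auto. exists e'. split; auto. exists x. intros y Hy.
      apply Rnot_lt_le. intro. apply H'. eauto. }
    destruct (iter_cont F Fc j (Bt p) ((e' - e0)/2) ltac:(lra)) as [th [Hth Pth]].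
    exists (th / 2). split; [lra|]. intros t Ht HCt.
    assert (dH (Bt p) (Bt t) < th).
    { enough (dH (Bt p) (Bt t) <= th/2) by lra. apply dBt; [lra|]. intros i Hi. specialize (Ht i Hi). lra. }
    specialize (Pth _ H). destruct (HCt j Hj ((e' + e0)/2) ltac:(lra) x) as [y' [Hy' Hdy']].
    destruct (dH_lt HX _ _ _ Pth) as [_ H2]. destruct (H2 y' Hy') as [y [Hy Hdy]].
    specialize (Hx y Hy). pose proof (mdist_tri M x y' y). lra.
  - exists n, rho. split; auto. intros S HS j Hj.
    destruct (dH_lt HX _ _ _ HS) as [_ H2].
    assert (Ht : forall i, exists s, kset S s /\ ((i < m)%nat -> mdist M (c i) s < rho)).
    { intros i. destruct (H2 (c i) (hfull _)) as [s [Hs Hd]]. eauto. }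
    set (t := fun i => proj1_sig (constructive_indefinite_description _ (Ht i))).
    assert (tP : forall i, kset S (t i) /\ ((i < m)%nat -> mdist M (c i) (t i) < rho)).
    { intros i. exact (proj2_sig (constructive_indefinite_description _ (Ht i))). }
    clearbody t.
    assert (HCt : C n t). { apply HC. intros i Hi. apply tP; auto. }
    assert (sub : forall y, kset (Bt t) y -> kset S y).
    { intros y Hy. apply HBt in Hy. destruct Hy as [i [Hi ->]]. apply tP. }
    enough (dH (Nat.iter j F S) Xfull <= eps / 3) by lra.
    apply (dH_le HX).
    + intros b _. exists b. split; auto. rewrite d_refl. lra.
    + intros x _. destruct (HCt j Hj (eps/3) ltac:(unfold e0; lra) x) as [y [Hy Hd]].
      exists y. split; [|lra]. eapply iter_mono; eauto.
Qed.

Lemma part1 {M : MetricSpace} (HX : compact_space M) (Xfull : KX M)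
  (hfull : forall x, kset Xfull x) (F : KX M -> KX M) :
  dH_continuous F -> monotone F -> attractor F Xfull -> asymptotically_stable F Xfull.
Proof.
  intros Fc Fm Hat. split; auto. intros eps He.
  destruct Hat as [U [KU [UX conv]]].
  pose proof (FX_full HX Xfull hfull F Fm (conv _ UX)) as FX.
  destruct (unif HX Xfull hfull F Fc Fm U KU UX conv eps He) as [n [d1 [Hd1 P1]]].
  destruct (prefix HX Xfull hfull F Fc FX n eps He) as [d2 [Hd2 P2]].
  exists (Rmin d1 d2). split; [apply Rmin_pos; auto|].
  intros S k HS. pose proof (Rmin_l d1 d2). pose proof (Rmin_r d1 d2).
  destruct (Compare_dec.le_lt_dec n k).
  - apply P1; auto. lra.
  - apply P2; auto. lra.
Qed.

Lemma hut_cont {M : MetricSpace} (HX : compact_space M) (fs : list (M -> M)) (H : KX M -> KX M) :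
  (forall f, In f fs -> mcontinuous M f) -> is_hutchinson fs H -> dH_continuous H.
Proof.
  intros Hc Hh A eps He.
  assert (Hpt : forall a, exists d, 0 < d /\ forall f, In f fs ->
     forall y, mdist M a y < d -> mdist M (f a) (f y) < eps/4).
  { intros a. apply list_min.
    - intros f d d' P [Hd' Hle] y Hy. apply P. lra.
    - intros f Hf. destruct (Hc f Hf a (eps/4) ltac:(lra)) as [d [Hd P]]. eauto. }
  set (dl := fun a => proj1_sig (constructive_indefinite_description _ (Hpt a))).
  assert (dlP : forall a, 0 < dl a /\ forall f, In f fs ->
     forall y, mdist M a y < dl a -> mdist M (f a) (f y) < eps/4).
  { intros a. exact (proj2_sig (constructive_indefinite_description _ (Hpt a))). }
  clearbody dl.
  destruct (@kset_cpt M A M (fun c z => mdist M c z < dl c / 2)) as [l Hl].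
  { intros; apply ball_open. }
  { intros x _. exists x. rewrite d_refl. pose proof (proj1 (dlP x)). lra. }
  destruct (list_min l (fun c d => d <= dl c / 2)) as [d [Hd Hd']].
  { intros; lra. }
  { intros c _. exists (dl c / 2). pose proof (proj1 (dlP c)). split; lra. }
  exists d. split; auto. intros B HB.
  destruct (dH_lt HX _ _ _ HB) as [H1 H2].
  assert (key : forall a b f, kset A a -> In f fs -> mdist M a b < d -> mdist M (f a) (f b) < eps/2).
  { intros a b f Ha Hf Hab. destruct (Hl a Ha) as [c [Hcl Hca]].
    specialize (Hd' c Hcl). destruct (dlP c) as [_ P].
    pose proof (P f Hf a ltac:(lra)). pose proof (P f Hf b ltac:(pose proof (mdist_tri M c a b); lra)).
    pose proof (mdist_tri M (f a) (f c) (f b)). rewrite (mdist_sym M (f a) (f c)) in *. lra. }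
  enough (dH (H A) (H B) <= eps/2) by lra.
  apply (dH_le HX).
  - intros y Hy. apply Hh in Hy. destruct Hy as [f [Hf [a [Ha ->]]]].
    destruct (H1 a Ha) as [b [Hb Hab]]. exists (f b). split.
    + apply Hh. eauto.
    + left. apply key; auto.
  - intros y Hy. apply Hh in Hy. destruct Hy as [f [Hf [b [Hb ->]]]].
    destruct (H2 b Hb) as [a [Ha Hab]]. exists (f a). split.
    + apply Hh. eauto.
    + left. rewrite mdist_sym. apply key; auto. rewrite mdist_sym. auto.
Qed.

Theorem theoremD (M : MetricSpace) (HX : compact_space M)
  (Xfull : KX M) (hfull : forall x, kset Xfull x) :
  (forall F : KX M -> KX M,
      dH_continuous F -> monotone F -> attractor F Xfull ->
      asymptotically_stable F Xfull) /\
  (forall (fs : list (M -> M)) (H : KX M -> KX M),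
      (forall f, In f fs -> @mcontinuous M f) ->
      is_hutchinson fs H ->
      strict_attractor H Xfull ->
      asymptotically_stable H Xfull).
Proof.
  split.
  - intros F Fc Fm Hat. apply part1; auto.
  - intros fs H Hc Hh [U [_ [HU conv]]]. apply part1; auto.
    + eapply hut_cont; eauto.
    + intros A B Hs y Hy. apply Hh in Hy. apply Hh. destruct Hy as [f [Hf [x [Hx ->]]]]. exists f. split; auto. exists x. split; auto.
    + exists (fun _ => True). split.
      { intros A _. exists 1. split; [lra|auto]. }
      split; [exact I|]. intros C _. apply conv. intros x _. apply HU, hfull.
Qed.
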